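(* Let $n\ge3$. Every optimal solution $V$ of the program $(\Gamma)$ associated to the game $CL(n)$ has rank at least $(4n-8)/3$.
   Context: Graph games: for a finite simple graph $\mathcal{G}$ with totally ordered vertex set and $e\ge1$ edges, the XOR game $A_{\mathcal{G}}$ has columns indexed by vertices and, for each edge $\{i,j\}$ with $i<j$, the two rows $(e_i-e_j)/(4e)$ and $(e_i+e_j)/(4e)$. $CL(n)$ is $A_{\mathcal{G}}$ where $\mathcal{G}$ has as vertices the nonempty subsets $S\subseteq\{1,\dots,n\}$ (in a fixed total order), with an edge between distinct $S,T$ iff $|S||T|-|S\cap T|$ is odd (equivalently $Y_SY_T=-Y_TY_S$ in the Clifford algebra generated by $Y_1,\dots,Y_n$ with $Y_i^2=1$, $Y_iY_j=-Y_jY_i$, $Y_S=Y_{i_1}\cdots Y_{i_k}$ for $S=\{i_1<\dots<i_k\}$). For a game with cost matrix $G$ with columns indexed by a set $J$, $(\Gamma)$ is the problem of maximizing $\sum_i\sqrt{\sum_{j,k}G_{ij}G_{ik}V_{jk}}$ over real positive semidefinite $J\times J$ matrices $V$ with all diagonal entries equal to $1$. *)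

(* Defs.v *)
From HB Require Import structures.
From mathcomp Require Import all_boot all_order all_algebra.
Set Implicit Arguments. Unset Strict Implicit. Unset Printing Implicit Defensive.
Import Order.TTheory GRing.Theory Num.Theory.
Local Open Scope ring_scope.

(* A finite simple graph on the totally ordered vertex set 'I_m
   (order = the order of ordinals), given by a relation adj, assumed
   symmetric and irreflexive where relevant. *)

Definition graph_edges (m : nat) (adj : rel 'I_m) : seq ('I_m * 'I_m) :=
  [seq p : 'I_m * 'I_m <- [seq (i, j) | i <- enum 'I_m, j <- enum 'I_m]
   | (p.1 < p.2)%N && adj p.1 p.2 :> bool].

Definition graph_game_rows (R : fieldType) (m : nat) (adj : rel 'I_m)
  : seq 'rV[R]_m :=
  let E := graph_edges adj in
  let e := size E in
  flatten [seq [:: (4 * e)%:R^-1 *: (delta_mx 0 p.1 - delta_mx 0 p.2);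
                   (4 * e)%:R^-1 *: (delta_mx 0 p.1 + delta_mx 0 p.2)]
          | p <- E].

Definition gamma_obj (R : rcfType) (m : nat) (rows : seq 'rV[R]_m)
  (V : 'M[R]_m) : R :=
  \sum_(g <- rows) Num.sqrt ((g *m V *m g^T) 0 0).

Definition psd (R : realFieldType) (m : nat) (V : 'M[R]_m) : Prop :=
  V^T = V /\ forall x : 'rV[R]_m, 0 <= (x *m V *m x^T) 0 0.

Definition gamma_feasible (R : realFieldType) (m : nat) (V : 'M[R]_m) : Prop :=
  psd V /\ forall i, V i i = 1.

Definition gamma_optimal (R : rcfType) (m : nat) (rows : seq 'rV[R]_m)
  (V : 'M[R]_m) : Prop :=
  gamma_feasible V /\
  forall W : 'M[R]_m, gamma_feasible W -> gamma_obj rows W <= gamma_obj rows V.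

Definition CLvert (n : nat) := {S : {set 'I_n} | S != set0}.

Definition CLsize (n : nat) : nat := #|{: CLvert n}|.

Definition CLset (n : nat) (i : 'I_(CLsize n)) : {set 'I_n} :=
  val (@enum_val (CLvert n) predT i).

Definition CL_adj (n : nat) : rel 'I_(CLsize n) :=
  fun i j =>
    (i != j) &&
    odd (#|CLset i| * #|CLset j| - #|CLset i :&: CLset j|)%N.

Definition CL_rows (R : fieldType) (n : nat) : seq 'rV[R]_(CLsize n) :=
  graph_game_rows R (@CL_adj n).

(* Main.v *)
Require Import Defs.
From HB Require Import structures.
From mathcomp Require Import all_boot all_order all_algebra.
Set Implicit Arguments. Unset Strict Implicit. Unset Printing Implicit Defensive.
Import Order.TTheory GRing.Theory Num.Theory.
From Stdlib Require Import Lia.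
Local Open Scope ring_scope.

Lemma pol_sum (Z : zmodType) (a b c d : Z) :
  (a + b + (c + d)) + (a - b - (c - d)) = (a + d) *+ 2.
Proof.
rewrite mulr2n opprB [a - b + _]addrC !addrA.
by rewrite [LHS](ACl ((1*4*7*5)*(2*8)*(3*6)))/= !subrr !addr0.
Qed.

Lemma pol_diff (Z : zmodType) (a b c d : Z) :
  (a + b + (c + d)) - (a - b - (c - d)) = (b + c) *+ 2.
Proof.
rewrite mulr2n !opprB !addrA.
by rewrite [LHS](ACl ((2*3*7*5)*(1*8)*(4*6)))/= !subrr !addr0.
Qed.

Lemma sq_id (R : comPzRingType) (a b : R) : (a+b)^+2 + (a-b)^+2 = (a^+2 + b^+2) *+ 2.
Proof.
rewrite sqrrD sqrrB opprD !addrA mulr2n !addrA.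
by rewrite [LHS](ACl ((1*4*5*8)*(2*6)*(3*7)))/= !subrr !addr0.
Qed.

Section Sq.
Variable R : rcfType.
Lemma sqrt_pair (x y z : R) : 0 <= x -> 0 <= y -> 0 <= z -> x + y = z + z ->
  Num.sqrt x + Num.sqrt y <= Num.sqrt z + Num.sqrt z /\
  (Num.sqrt x + Num.sqrt y = Num.sqrt z + Num.sqrt z -> x = y).
Proof.
move=> hx hy hz hs.
set s := Num.sqrt x; set t := Num.sqrt y; set w := Num.sqrt z.
have key : (s + t) ^+ 2 + (s - t) ^+ 2 = (w + w) ^+ 2.
  by rewrite sq_id !sqr_sqrtr // hs -(sqr_sqrtr hz) -/w -sq_id subrr expr0n /= addr0.
have hst : 0 <= s + t by rewrite addr_ge0 ?sqrtr_ge0.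
have hww : 0 <= w + w by rewrite addr_ge0 ?sqrtr_ge0.
split.
  rewrite -ler_sqr ?nnegrE // -key lerDl; exact: sqr_ge0.
move=> heq; move: key; rewrite heq -[RHS]addr0 => /addrI /eqP.
rewrite sqrf_eq0 subr_eq0 => /eqP est.
by rewrite -(sqr_sqrtr hx) -(sqr_sqrtr hy) -/s -/t est.
Qed.
End Sq.

Section Bil.
Variables (R : rcfType) (N : nat) (V : 'M[R]_N).
Definition Bf (x y : 'rV[R]_N) : R := (x *m V *m y^T) 0 0.
Definition ev (i : 'I_N) : 'rV[R]_N := delta_mx 0 i.

Lemma BDl x y z : Bf (x + y) z = Bf x z + Bf y z.
Proof. by rewrite /Bf !mulmxDl mxE. Qed.
Lemma BDr x y z : Bf x (y + z) = Bf x y + Bf x z.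
Proof. by rewrite /Bf linearD /= mulmxDr mxE. Qed.
Lemma BZl a x z : Bf (a *: x) z = a * Bf x z.
Proof. by rewrite /Bf -!scalemxAl mxE. Qed.
Lemma BZr a x z : Bf x (a *: z) = a * Bf x z.
Proof. by rewrite /Bf linearZ /= -scalemxAr mxE. Qed.
Lemma BNl x z : Bf (- x) z = - Bf x z.
Proof. by rewrite -scaleN1r BZl mulN1r. Qed.
Lemma BNr x z : Bf x (- z) = - Bf x z.
Proof. by rewrite -scaleN1r BZr mulN1r. Qed.
Lemma BBl x y z : Bf (x - y) z = Bf x z - Bf y z.
Proof. by rewrite BDl BNl. Qed.
Lemma BBr x y z : Bf x (y - z) = Bf x y - Bf x z.
Proof. by rewrite BDr BNr. Qed.
Lemma B0l z : Bf 0 z = 0.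
Proof. by rewrite /Bf !mul0mx mxE. Qed.
Lemma B0r z : Bf z 0 = 0.
Proof. by rewrite /Bf trmx0 mulmx0 mxE. Qed.
Lemma Bee i j : Bf (ev i) (ev j) = V i j.
Proof. by rewrite /Bf /ev -rowE trmx_delta -colE !mxE. Qed.
Lemma Bsym x y : V^T = V -> Bf x y = Bf y x.
Proof.
move=> hV; rewrite /Bf.
have -> : x *m V *m y^T = (y *m V *m x^T)^T by rewrite !trmx_mul trmxK hV mulmxA.
by rewrite mxE.
Qed.

Lemma Bentry m1 m2 (X : 'M[R]_(m1, N)) (Y : 'M[R]_(m2, N)) p q :
  (X *m V *m Y^T) p q = Bf (row p X) (row q Y).
Proof.
rewrite /Bf !mxE; apply: eq_bigr => k _.
by rewrite !mxE; congr (_ * _); apply: eq_bigr => j _; rewrite mxE.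
Qed.

Lemma gram_rank (I : finType) (f : I -> 'rV[R]_N) :
  (forall i j, i != j -> Bf (f i) (f j) = 0) ->
  (\sum_(i : I) (Bf (f i) (f i) != 0%R) <= \rank V)%N.
Proof.
move=> hort.
set A := [set i | Bf (f i) (f i) != 0].
have -> : (\sum_(i : I) (Bf (f i) (f i) != 0%R))%N = #|A|.
  rewrite -sum1_card [RHS]big_mkcond /=; apply: eq_bigr => i _.
  by rewrite inE; case: (_ != 0).
pose X : 'M[R]_(#|A|, N) := \matrix_(p < #|A|) f (enum_val p).
pose G := X *m V *m X^T.
have hG : G = diag_mx (\row_p Bf (f (enum_val p)) (f (enum_val p))).
  apply/matrixP => p q; rewrite /G Bentry !mxE !rowK.
  have [->|npq] := eqVneq p q; first by rewrite mulr1n.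
  rewrite mulr0n hort //.
  by apply: contra npq => /eqP /enum_val_inj ->.
have uG : G \in unitmx.
  rewrite unitmxE hG det_diag unitfE; apply/prodf_neq0 => p _.
  rewrite mxE; have := enum_valP p; by rewrite inE.
have := mxrank_unit uG => <-.
rewrite /G; apply: leq_trans (mxrankM_maxl _ _) _.
exact: mxrankM_maxr.
Qed.
End Bil.

Section Game.
Variables (R : rcfType) (m : nat) (adj : rel 'I_m).
Let E := graph_edges adj.
Let c : R := (4 * size E)%:R^-1.
Let g1 (p : 'I_m * 'I_m) : 'rV[R]_m := c *: (ev R p.1 - ev R p.2).
Let g2 (p : 'I_m * 'I_m) : 'rV[R]_m := c *: (ev R p.1 + ev R p.2).
Let t (W : 'M[R]_m) p := Num.sqrt (Bf W (g1 p) (g1 p)) + Num.sqrt (Bf W (g2 p) (g2 p)).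

Lemma obj_edges W : gamma_obj (graph_game_rows R adj) W = \sum_(p <- E) t W p.
Proof.
rewrite /gamma_obj /graph_game_rows big_flatten big_map; apply: eq_bigr => p _.
by rewrite big_cons big_seq1.
Qed.

Lemma q1E W p : Bf W (g1 p) (g1 p) = c * (c * (W p.1 p.1 - W p.1 p.2 - (W p.2 p.1 - W p.2 p.2))).
Proof. by rewrite /g1 BZl BZr !BBl !BBr !Bee. Qed.
Lemma q2E W p : Bf W (g2 p) (g2 p) = c * (c * (W p.1 p.1 + W p.1 p.2 + (W p.2 p.1 + W p.2 p.2))).
Proof. by rewrite /g2 BZl BZr !BDl !BDr !Bee. Qed.

Lemma feas1 : gamma_feasible (1%:M : 'M[R]_m).
Proof.
split; last by move=> i; rewrite mxE eqxx.
split; first exact: trmx1.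
move=> x; rewrite mulmx1 mxE; apply: sumr_ge0 => k _.
by rewrite !mxE -expr2 sqr_ge0.
Qed.

Lemma edge_opt (V : 'M[R]_m) : gamma_optimal (graph_game_rows R adj) V ->
  forall p, p \in E -> V p.1 p.2 = 0.
Proof.
case=> [[[hsym hpsd] hdiag] hopt].
have hE p : p \in E -> (p.1 < p.2)%N by rewrite mem_filter => /andP[/andP[]].
have hneq p : p \in E -> p.1 != p.2.
  by move=> /hE; apply: contraTneq => ->; rewrite ltnn.
have cmp p : p \in E -> t V p <= t 1%:M p /\ (t V p = t 1%:M p -> V p.1 p.2 = 0).
  move=> hp.
  have h1 : (1%:M : 'M[R]_m) p.1 p.2 = 0 by rewrite mxE (negbTE (hneq p hp)).
  have h2 : (1%:M : 'M[R]_m) p.2 p.1 = 0 by rewrite mxE eq_sym (negbTE (hneq p hp)).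
  have e12 : Bf 1%:M (g1 p) (g1 p) = Bf 1%:M (g2 p) (g2 p).
    by rewrite q1E q2E h1 h2 subr0 sub0r opprK add0r addr0.
  have hsum : Bf V (g1 p) (g1 p) + Bf V (g2 p) (g2 p) =
      Bf 1%:M (g1 p) (g1 p) + Bf 1%:M (g1 p) (g1 p).
    rewrite [X in _ = _ + X]e12 !q1E !q2E -!mulrDr addrC [in RHS]addrC !pol_sum.
    by rewrite !hdiag !mxE !eqxx.
  have [hle heq] := sqrt_pair (hpsd _) (hpsd _) (proj2 (proj1 feas1) (g1 p)) hsum.
  split; first by rewrite /t -e12.
  rewrite /t -e12 => /heq /eqP.
  change (Bf V (g1 p) (g1 p) == Bf V (g2 p) (g2 p) -> V p.1 p.2 = 0).
  rewrite eq_sym -subr_eq0 q1E q2E -!mulrBr pol_diff.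
  have cn0 : c != 0.
    rewrite /c invr_eq0 pnatr_eq0 muln_eq0 /=.
    by move: hp; case: (E).
  rewrite !mulf_eq0 (negbTE cn0) /= mulrn_eq0 /=.
  have -> : V p.2 p.1 = V p.1 p.2 by rewrite -[in LHS]hsym mxE.
  by rewrite -mulr2n mulrn_eq0 /= => /eqP.
move=> p0 hp0; apply/eqP; apply/negPn/negP => hne.
have hlt : t V p0 < t 1%:M p0.
  have [hle heq] := cmp p0 hp0; rewrite lt_neqAle hle andbT.
  by apply/negP => /eqP /heq /eqP; rewrite (negbTE hne).
have := hopt _ feas1; rewrite !obj_edges => hge.
suff : \sum_(p <- E) t V p < \sum_(p <- E) t 1%:M p by rewrite ltNge hge.
rewrite big_seq [X in _ < X]big_seq !(big_rem _ hp0) hp0.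
apply: ltr_leD hlt _; apply: ler_sum => p hp.
exact: (proj1 (cmp p hp)).
Qed.
End Game.

Ltac close_eqs :=
  rewrite ?eqxx /=;
  do ?[ match goal with
        | H : is_true (?u != ?v) |- context[?u == ?v] => rewrite (negbTE H)
        | H : is_true (?u != ?v) |- context[?v == ?u] => rewrite [v == u]eq_sym (negbTE H)
        end ];
  rewrite ?orbT ?orbF ?andbT ?andbF ?eqxx //=.

Section Sets.
Variable n : nat.
Implicit Types a b c k l x : 'I_n.

Lemma card3 a b k : a != b -> a != k -> b != k -> #|[set a; b; k]| = 3%N.
Proof.
move=> hab hak hbk; rewrite setUC !cardsU1 cards1 !inE.
by close_eqs.
Qed.

Lemma I11 a b : a != b -> #|[set a] :&: [set b]| = 0%N.
Proof.
move=> hab; apply/eqP; rewrite cards_eq0; apply/eqP/setP => x; rewrite !inE.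
by case: (x =P a) => [->|/eqP ?]; close_eqs.
Qed.

Lemma I13 l a b k : l != a -> l != b -> l != k -> #|[set l] :&: [set a; b; k]| = 0%N.
Proof.
move=> *; apply/eqP; rewrite cards_eq0; apply/eqP/setP => x; rewrite !inE.
by case: (x =P l) => [->|/eqP ?]; close_eqs.
Qed.

Lemma I33a a b k l : a != b -> a != k -> b != k -> a != l -> b != l -> k != l ->
  #|[set a; b; k] :&: [set a; b; l]| = 2%N.
Proof.
move=> *.
have -> : [set a; b; k] :&: [set a; b; l] = [set a; b].
  apply/setP => x; rewrite !inE.
  case: (x =P a) => [->|/eqP ?]; close_eqs.
  case: (x =P b) => [->|/eqP ?]; close_eqs.
  by case: (x =P k) => [->|/eqP ?]; close_eqs.
by rewrite cards2; close_eqs.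
Qed.

Lemma I33b a b c k : a != b -> a != c -> a != k -> b != c -> b != k -> c != k ->
  #|[set a; b; k] :&: [set a; c; k]| = 2%N.
Proof.
move=> *.
have -> : [set a; b; k] :&: [set a; c; k] = [set a; k].
  apply/setP => x; rewrite !inE.
  case: (x =P a) => [->|/eqP ?]; close_eqs.
  case: (x =P k) => [->|/eqP ?]; close_eqs.
  by case: (x =P b) => [->|/eqP ?]; close_eqs.
by rewrite cards2; close_eqs.
Qed.
End Sets.

Section CL.
Variables (R : rcfType) (n : nat).

Definition vx (S : {set 'I_n}) (hS : S != set0) : 'I_(CLsize n) :=
  enum_rank (exist _ S hS : CLvert n).

Lemma CLset_vx S (hS : S != set0) : CLset (vx hS) = S.
Proof. by rewrite /CLset /vx enum_rankK. Qed.

Lemma vx_neq S T (hS : S != set0) (hT : T != set0) : S != T -> vx hS != vx hT.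
Proof.
apply: contra => /eqP /enum_rank_inj h.
by move: (congr1 val h) => /= ->.
Qed.

Lemma CL_optV (V : 'M[R]_(CLsize n)) : gamma_optimal (CL_rows R n) V ->
  forall i j, CL_adj i j -> V i j = 0.
Proof.
move=> hopt.
have hsym : V^T = V by case: hopt => [[[]]].
have hz := edge_opt hopt.
have key (i j : 'I_(CLsize n)) : (i < j)%N -> CL_adj i j -> V i j = 0.
  move=> hlt hadj; apply: (hz (i, j)).
  rewrite mem_filter /= hlt hadj /=.
  by apply: (allpairs_f (fun i j => (i, j))); rewrite mem_enum.
move=> i j hadj.
have [hlt|hgt|heq] := ltngtP i j; first exact: key.
  rewrite -hsym mxE; apply: key => //.
  by move: hadj; rewrite /CL_adj eq_sym mulnC setIC.
by move: hadj; rewrite /CL_adj (val_inj heq) eqxx.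
Qed.

Lemma CL_sets (V : 'M[R]_(CLsize n)) : gamma_optimal (CL_rows R n) V ->
  forall S T (hS : S != set0) (hT : T != set0), S != T ->
  odd (#|S| * #|T| - #|S :&: T|) -> V (vx hS) (vx hT) = 0.
Proof.
move=> hopt S T hS hT hST hodd; apply: CL_optV => //.
by rewrite /CL_adj !CLset_vx hodd vx_neq.
Qed.
End CL.

Lemma quad_gen (R : rcfType) N (V : 'M[R]_N) (u w : 'rV[R]_N) (g : R) :
  Bf V u w = Bf V w u -> Bf V w w = 1 -> Bf V u w = g ->
  Bf V (u - g *: w) (u - g *: w) = Bf V u u - g ^+ 2.
Proof.
by move=> hs h1 h2; rewrite BBl !BBr !BZl !BZr -hs h2 h1 mulr1 subrr subr0 expr2.
Qed.

Lemma sum_bool (T : finType) (P : pred T) :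
  (\sum_(i : T) (P i : nat))%N = #|[set i | P i]|.
Proof.
rewrite -sum1_card [RHS]big_mkcond /=; apply: eq_bigr => i _.
by rewrite inE; case: (P i).
Qed.

Section Main.
Variables (R : rcfType) (n : nat) (V : 'M[R]_(CLsize n)).
Hypothesis hopt : gamma_optimal (CL_rows R n) V.

Lemma ne1 (i : 'I_n) : [set i] != set0.
Proof. by apply/set0Pn; exists i; rewrite inE. Qed.
Lemma ne3 (a b k : 'I_n) : [set a; b; k] != set0.
Proof. by apply/set0Pn; exists a; rewrite !inE eqxx. Qed.

Let sg i := vx (ne1 i).
Let tr a b k := vx (ne3 a b k).
Let gam a b k := V (sg k) (tr a b k).

Let hsym : V^T = V. Proof. by case: hopt => [[[]]]. Qed.
Let hdiag : forall i, V i i = 1. Proof. by case: hopt => [[_]]. Qed.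
Let hpsd : forall x, 0 <= Bf V x x. Proof. by case: hopt => [[[]]]. Qed.
Let Vsym i j : V i j = V j i. Proof. by rewrite -[in LHS]hsym mxE. Qed.
Let Bsy x y : Bf V x y = Bf V y x. Proof. exact: Bsym. Qed.

Lemma neq_mem (S T : {set 'I_n}) x : x \in S -> x \notin T -> S != T.
Proof. by move=> hx hT; apply/eqP => h; move: hx; rewrite h (negbTE hT). Qed.

Lemma F1 i j : i != j -> V (sg i) (sg j) = 0.
Proof.
move=> hij; apply: CL_sets => //.
  by apply: (@neq_mem _ _ i); rewrite !inE ?eqxx //.
by rewrite !cards1 I11.
Qed.

Lemma F2 l a b k : a != b -> a != k -> b != k -> l != a -> l != b -> l != k ->
  V (sg l) (tr a b k) = 0.
Proof.
move=> hab hak hbk hla hlb hlk; apply: CL_sets => //.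
  by apply: (@neq_mem _ _ l); rewrite !inE ?eqxx //; close_eqs.
by rewrite cards1 card3 // I13.
Qed.

Lemma F3 a b k l : a != b -> a != k -> b != k -> a != l -> b != l -> k != l ->
  V (tr a b k) (tr a b l) = 0.
Proof.
move=> *; apply: CL_sets => //.
  by apply: (@neq_mem _ _ k); rewrite !inE ?eqxx ?orbT //; close_eqs.
by rewrite !card3 // I33a.
Qed.

Lemma F4 a b c k : a != b -> a != c -> a != k -> b != c -> b != k -> c != k ->
  V (tr a b k) (tr a c k) = 0.
Proof.
move=> *; apply: CL_sets => //.
  by apply: (@neq_mem _ _ b); rewrite !inE ?eqxx ?orbT //; close_eqs.
by rewrite !card3 // I33b.
Qed.

Lemma card_notin (A : {set 'I_n}) : #|[set i | i \notin A]| = (n - #|A|)%N.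
Proof.
have -> : [set i | i \notin A] = ~: A by apply/setP => i; rewrite !inE.
by rewrite cardsCs setCK card_ord.
Qed.

Lemma rank_singles : (n <= \rank V)%N.
Proof.
have := @gram_rank _ _ V _ (fun i : 'I_n => ev R (sg i)).
rewrite sum_bool.
have -> : [set i | Bf V (ev R (sg i)) (ev R (sg i)) != 0] = setT.
  by apply/setP => i; rewrite !inE Bee hdiag oner_neq0.
rewrite cardsT card_ord; apply.
by move=> i j hij; rewrite Bee F1.
Qed.

Lemma rank_pair a b : a != b ->
  ((n - 2) + \sum_(k : 'I_n) ((k \notin [set a; b]) && (gam a b k ^+ 2 != 1%R)) <= \rank V)%N.
Proof.
move=> hab.
pose xk k := ev R (tr a b k) - gam a b k *: ev R (sg k).
pose f (p : 'I_n + 'I_n) := match p with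
  | inl i => if i \in [set a; b] then 0 else ev R (sg i)
  | inr k => if k \in [set a; b] then 0 else xk k end.
have mix i l : i \notin [set a; b] -> l \notin [set a; b] ->
    Bf V (ev R (sg i)) (xk l) = 0.
  rewrite !inE !negb_or => /andP[hia hib] /andP[hla hlb].
  rewrite /xk BBr BZr !Bee.
  have [->|hil] := eqVneq i l; first by rewrite hdiag mulr1 subrr.
  by rewrite F2 // ?F1 // ?mulr0 ?subr0 // eq_sym.
have := @gram_rank _ _ V _ f.
rewrite big_sumType /=.
have e1 i : (Bf V (f (inl i)) (f (inl i)) != 0) = (i \notin [set a; b]).
  rewrite /=; case: ifP => _; first by rewrite B0l eqxx.
  by rewrite Bee hdiag oner_neq0.
have e2 k : (Bf V (f (inr k)) (f (inr k)) != 0) =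
    (k \notin [set a; b]) && (gam a b k ^+ 2 != 1%R).
  rewrite /=; case: ifP => _; first by rewrite B0l eqxx.
  rewrite /xk quad_gen ?Bee ?hdiag // ?subr_eq0 1?eq_sym //.
rewrite (eq_bigr _ (fun i _ => congr1 nat_of_bool (e1 i))).
rewrite (eq_bigr _ (fun k _ => congr1 nat_of_bool (e2 k))).
rewrite sum_bool card_notin cards2 hab; apply.
move=> p q; case: p => [i|k]; case: q => [j|l] hpq /=.
- case: ifP => hi; first by rewrite B0l.
  case: ifP => hj; first by rewrite B0r.
  by rewrite Bee F1 //; apply: contra hpq => /eqP ->.
- case: ifP => hi; first by rewrite B0l.
  case: ifP => hj; first by rewrite B0r.
  by rewrite mix ?hi ?hj.
- case: ifP => hi; first by rewrite B0l.
  case: ifP => hj; first by rewrite B0r.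
  by rewrite Bsy mix ?hi ?hj.
- case: ifP => hi; first by rewrite B0l.
  case: ifP => hj; first by rewrite B0r.
  have hkl : k != l by apply: contra hpq => /eqP ->.
  move: hi hj; rewrite !inE => /negbT; rewrite negb_or => /andP[hka hkb].
  move=> /negbT; rewrite negb_or => /andP[hla hlb].
  rewrite /xk BBl !BBr !BZl !BZr !Bee.
  have z1 : V (sg l) (tr a b k) = 0.
    by apply: F2 => //; rewrite eq_sym.
  have z2 : V (sg k) (tr a b l) = 0.
    by apply: F2 => //; rewrite eq_sym.
  have z3 : V (tr a b k) (tr a b l) = 0.
    by apply: F3 => //; rewrite eq_sym.
  rewrite (Vsym (tr a b k) (sg l)) z1 z2 z3 F1 //.
  by rewrite !mulr0 !subr0.
Qed.

Lemma noboth a b c k : a != b -> a != c -> b != c -> k != a -> k != b -> k != c ->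
  gam a b k ^+ 2 = 1 -> gam a c k ^+ 2 = 1 -> False.
Proof.
move=> hab hac hbc hka hkb hkc h1 h2.
set g1 := gam a b k; set g2 := gam a c k.
pose y := ev R (sg k) - g1 *: ev R (tr a b k).
pose x := y - g2 *: ev R (tr a c k).
have hy : Bf V y y = 1 - g1 ^+ 2.
  by rewrite /y quad_gen ?Bee ?hdiag //; apply: Vsym.
have hx : Bf V x x = 1 - g1 ^+ 2 - g2 ^+ 2.
  rewrite /x quad_gen ?hy ?Bee ?hdiag //.
  have z : V (tr a b k) (tr a c k) = 0 by apply: F4 => //; rewrite eq_sym.
  by rewrite /y BBl BZl !Bee z mulr0 subr0.
have := hpsd x; rewrite hx h1 h2 subrr sub0r.
by rewrite oppr_ge0 ler10.
Qed.

Lemma main_bound : (3 <= n)%N -> (4 * n - 8 <= 3 * \rank V)%N.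
Proof.
move=> hn.
have h0 : (0 < n)%N by apply: leq_trans hn.
have h1 : (1 < n)%N by apply: leq_trans hn.
have h2 : (2 < n)%N by [].
pose a := Ordinal h0; pose b := Ordinal h1; pose c := Ordinal h2.
have hab : a != b by [].
have hac : a != c by [].
have hbc : b != c by [].
have Hs := rank_singles.
have Hab := rank_pair hab.
have Hac := rank_pair hac.
set U := (\sum_(k : 'I_n) _)%N in Hab.
set W := (\sum_(k : 'I_n) _)%N in Hac.
have H3 : (n - 3 <= U + W)%N.
  rewrite /U /W -big_split /=.
  have <- : #|[set k : 'I_n | k \notin [set a; b; c]]| = (n - 3)%N.
    by rewrite card_notin card3.
  rewrite -sum_bool; apply: leq_sum => k _.
  case hk: (k \notin [set a; b; c]) => //.
  move: hk; rewrite !inE !negb_or => /andP[/andP[hka hkb] hkc].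
  rewrite hka hkb hkc /=.
  case: eqP => [e1|] //=; case: eqP => [e2|] //=.
  by case: (noboth hab hac hbc hka hkb hkc e1 e2).
move: hn Hs Hab Hac H3; move: (\rank V) U W => r U W.
move=> /ssrnat.leP h1' /ssrnat.leP h2' /ssrnat.leP h3' /ssrnat.leP h4' /ssrnat.leP h5'; apply/ssrnat.leP.
move: h1' h2' h3' h4' h5'; rewrite -?(minusE, multE, plusE); lia.
Qed.

End Main.

Theorem proposition7p3 (R : rcfType) (n : nat) (hn : (3 <= n)%N)
  (V : 'M[R]_(CLsize n)) :
  gamma_optimal (CL_rows R n) V ->
  (4 * n - 8 <= 3 * \rank V)%N.
Proof. by move=> hopt; apply: main_bound. Qed.
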